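(* Let $T\ge1$ and $N\ge 1$ be integers, and let $\psi_j$, $\eta$, $q_0$ be as in the context. Then $$q_0(1)=\frac{1}{K},\qquad\text{where}\qquad \frac1K=2^{\frac{N-2}{2}}\prod_{j=1}^{\frac{N-2}{2}}(1-\cos\psi_j)\ \text{ ($N$ even)},\qquad \frac1K=2^{\frac{N-3}{2}}\prod_{j=1}^{\frac{N-1}{2}}(1-\cos\psi_j)\ \text{ ($N$ odd)},$$ and the normalized polynomial $q(z)=K\,q_0(z)$ (which satisfies $q(1)=1$) satisfies $q(-1)=P_N$, where $$P_N=\frac{T}{2+(N-1)T}\prod_{j=1}^{\frac{N-2}{2}}\cot^2\frac{\psi_j}{2}\ \text{ ($N$ even)},\qquad P_N=\prod_{j=1}^{\frac{N-1}{2}}\cot^2\frac{\psi_j}{2}\ \text{ ($N$ odd)}.$$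
   Context: Fix integers $T\ge 1$, $N\ge1$. Set $\psi_j=\dfrac{\pi(2+T(2j-1))}{2+(N-1)T}$. Define the polynomial $\eta$ by $\eta(z)=z(z+1)\prod_{j=1}^{\frac{N-2}{2}}(z-e^{i\psi_j})(z-e^{-i\psi_j})$ if $N$ is even, and $\eta(z)=z\prod_{j=1}^{\frac{N-1}{2}}(z-e^{i\psi_j})(z-e^{-i\psi_j})$ if $N$ is odd (empty products equal $1$). Define $$q_0(z)=\frac{T}{2+(N-1)T}\left(\Bigl(\frac1T+N\Bigr)\frac{\eta(z)}{z}-\eta'(z)\right),$$ a polynomial of degree at most $N-1$. *)

(* Defs.v *)
From Stdlib Require Import Reals ZArith.
Open Scope R_scope.

Fixpoint prodR (n : nat) (f : nat -> R) : R :=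
  match n with
  | O => 1
  | S k => prodR k f * f (S k)
  end.

Definition psi (T N j : nat) : R :=
  PI * (2 + INR T * (2 * INR j - 1)) / (2 + (INR N - 1) * INR T).

Definition mN (N : nat) : nat :=
  if Nat.even N then ((N - 2) / 2)%nat else ((N - 1) / 2)%nat.

(* eta(z), with each conjugate pair (z - e^{i psi})(z - e^{-i psi})
   written out as the real quadratic z^2 - 2 cos(psi) z + 1. *)
Definition eta (T N : nat) (z : R) : R :=
  (if Nat.even N then z * (z + 1) else z) *
  prodR (mN N) (fun j => z ^ 2 - 2 * cos (psi T N j) * z + 1).

(* value of q0 at a point z <> 0, given the value d = eta'(z) *)
Definition q0_at (T N : nat) (z d : R) : R :=
  INR T / (2 + (INR N - 1) * INR T) *
  ((/ INR T + INR N) * (eta T N z / z) - d).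

Definition invK (T N : nat) : R :=
  if Nat.even N then
    powerRZ 2 ((Z.of_nat N - 2) / 2)%Z *
    prodR ((N - 2) / 2) (fun j => 1 - cos (psi T N j))
  else
    powerRZ 2 ((Z.of_nat N - 3) / 2)%Z *
    prodR ((N - 1) / 2) (fun j => 1 - cos (psi T N j)).

Definition cot2 (x : R) : R := (cos x / sin x) ^ 2.

Definition PN (T N : nat) : R :=
  if Nat.even N then
    INR T / (2 + (INR N - 1) * INR T) *
    prodR ((N - 2) / 2) (fun j => cot2 (psi T N j / 2))
  else
    prodR ((N - 1) / 2) (fun j => cot2 (psi T N j / 2)).

(* Main.v *)
Require Import Defs.
From Stdlib Require Import Reals ZArith Lia Lra.
From Coquelicot Require Import Coquelicot.
Open Scope R_scope.

Fixpoint Dp (c : nat -> R) (n : nat) (x : R) : R :=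
  match n with
  | O => 0
  | S k => Dp c k x * (x ^ 2 - 2 * c (S k) * x + 1)
           + prodR k (fun j => x ^ 2 - 2 * c j * x + 1) * (2 * x - 2 * c (S k))
  end.

Lemma quad_der (a x : R) : derivable_pt_lim (fun z => z^2 - 2*a*z + 1) x (2*x - 2*a).
Proof. apply is_derive_Reals. auto_derive; auto. ring. Qed.

Lemma dpl_eq f x l l' : derivable_pt_lim f x l -> l = l' -> derivable_pt_lim f x l'.
Proof. intros H <-; exact H. Qed.

Lemma prod_der (c : nat -> R) n x :
  derivable_pt_lim (fun z => prodR n (fun j => z ^ 2 - 2 * c j * z + 1)) x (Dp c n x).
Proof.
  induction n as [|k IH]; simpl.
  - apply derivable_pt_lim_const.
  - eapply dpl_eq.
    + apply (derivable_pt_lim_mult (fun z => prodR k (fun j => z ^ 2 - 2 * c j * z + 1))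
              (fun z => z ^ 2 - 2 * c (S k) * z + 1)).
      * exact IH.
      * apply quad_der.
    + reflexivity.
Qed.

Lemma Dp_1 c n : Dp c n 1 = INR n * prodR n (fun j => 1 ^ 2 - 2 * c j * 1 + 1).
Proof. induction n as [|k IH]; cbn [Dp prodR]. simpl; ring.
  rewrite IH, S_INR. ring. Qed.

Lemma Dp_m1 c n : Dp c n (-1) = - INR n * prodR n (fun j => (-1) ^ 2 - 2 * c j * (-1) + 1).
Proof. induction n as [|k IH]; cbn [Dp prodR]. simpl; ring.
  rewrite IH, S_INR. ring. Qed.

Lemma P_1 c n : prodR n (fun j => 1 ^ 2 - 2 * c j * 1 + 1) = 2 ^ n * prodR n (fun j => 1 - c j).
Proof. induction n as [|k IH]; cbn [prodR]. ring. rewrite IH. change (2 ^ S k) with (2 * 2 ^ k). ring. Qed.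

Lemma P_m1 c n : prodR n (fun j => (-1) ^ 2 - 2 * c j * (-1) + 1) = 2 ^ n * prodR n (fun j => 1 + c j).
Proof. induction n as [|k IH]; cbn [prodR]. ring. rewrite IH. change (2 ^ S k) with (2 * 2 ^ k). ring. Qed.

Lemma prod_ratio (c d : nat -> R) n :
  (forall j, (1 <= j <= n)%nat -> d j * (1 - c j) = 1 + c j /\ 1 - c j <> 0) ->
  prodR n (fun j => 1 + c j) = prodR n d * prodR n (fun j => 1 - c j)
  /\ prodR n (fun j => 1 - c j) <> 0.
Proof.
  induction n as [|k IH]; intros H; simpl.
  - split; [ring | lra].
  - destruct IH as [IH1 IH2]. { intros j Hj; apply H; lia. }
    destruct (H (S k)) as [H1 H2]; [lia|].
    split. rewrite IH1, <- H1. ring. apply Rmult_integral_contrapositive; auto.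
Qed.

Lemma cot2_id x : 0 < x < PI / 2 ->
  cot2 x * (1 - cos (2 * x)) = 1 + cos (2 * x) /\ 1 - cos (2 * x) <> 0.
Proof.
  intros Hx. assert (Hs : 0 < sin x) by (apply sin_gt_0; lra).
  rewrite cos_2a_sin. unfold cot2.
  assert (Hc : cos x ^ 2 + sin x ^ 2 = 1) by (rewrite <- (sin2_cos2 x); unfold Rsqr; ring).
  split.
  - replace ((cos x / sin x) ^ 2 * (1 - (1 - 2 * sin x * sin x))) with (2 * cos x ^ 2)
      by (field; lra). nra.
  - intro H; nra.
Qed.

Lemma psi_bounds T N j : (1 <= T)%nat -> (1 <= j)%nat -> (2 * j < N)%nat ->
  0 < psi T N j / 2 < PI / 2.
Proof.
  intros hT hj hjN. unfold psi.
  apply le_INR in hT. apply le_INR in hj. apply lt_INR in hjN.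
  rewrite mult_INR in hjN. simpl in hT, hj, hjN.
  assert (Ha : 0 < 2 + INR T * (2 * INR j - 1)) by nra.
  assert (Hb : 2 + INR T * (2 * INR j - 1) < 2 + (INR N - 1) * INR T) by nra.
  assert (HP := PI_RGT_0).
  split.
  - apply Rmult_lt_0_compat; [|lra]. apply Rmult_lt_0_compat; [|apply Rinv_0_lt_compat]; nra.
  - unfold Rdiv. rewrite Rmult_assoc.
    assert (HbP : 0 < 2 + (INR N - 1) * INR T) by lra.
    assert ((2 + INR T * (2 * INR j - 1)) * / (2 + (INR N - 1) * INR T) < 1).
    { apply (Rmult_lt_reg_r (2 + (INR N - 1) * INR T)); auto.
      rewrite Rmult_assoc, Rinv_l by lra. lra. }
    assert (0 < (2 + INR T * (2 * INR j - 1)) * / (2 + (INR N - 1) * INR T)).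
    { apply Rmult_lt_0_compat; auto. apply Rinv_0_lt_compat; auto. }
    nra.
Qed.

Lemma ratio_N T N m : (1 <= T)%nat -> (2 * m < N)%nat ->
  prodR m (fun j => 1 + cos (psi T N j)) =
    prodR m (fun j => cot2 (psi T N j / 2)) * prodR m (fun j => 1 - cos (psi T N j))
  /\ prodR m (fun j => 1 - cos (psi T N j)) <> 0.
Proof.
  intros hT hm. apply prod_ratio. intros j Hj.
  pose proof (psi_bounds T N j hT ltac:(lia) ltac:(lia)) as B.
  pose proof (cot2_id _ B) as C.
  replace (2 * (psi T N j / 2)) with (psi T N j) in C by field. exact C.
Qed.

Theorem mainTheorem3 (T N : nat) (hT : (1 <= T)%nat) (hN : (1 <= N)%nat)
  (d1 dm1 : R)
  (hd1 : derivable_pt_lim (eta T N) 1 d1)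
  (hdm1 : derivable_pt_lim (eta T N) (-1) dm1) :
  q0_at T N 1 d1 = invK T N /\
  / invK T N * q0_at T N (-1) dm1 = PN T N.
Proof.
  set (c := fun j => cos (psi T N j)).
  assert (HTp : 0 < INR T) by (apply lt_0_INR; lia).
  unfold q0_at, invK, PN. unfold eta, mN in hd1, hdm1 |- *.
  destruct (Nat.even N) eqn:E.
  - apply Nat.even_spec in E. destruct E as [k Hk].
    destruct k as [|m]; [lia|].
    assert (Hidx : ((N - 2) / 2 = m)%nat).
    { rewrite Hk. replace (2 * S m - 2)%nat with (m * 2)%nat by lia. apply Nat.div_mul; lia. }
    assert (HZ : ((Z.of_nat N - 2) / 2)%Z = Z.of_nat m).
    { rewrite Hk. replace (Z.of_nat (2 * S m) - 2)%Z with (Z.of_nat m * 2)%Z by lia.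
      apply Z.div_mul; lia. }
    assert (HNR : INR N = 2 * INR m + 2).
    { rewrite Hk, mult_INR, (S_INR m). simpl (INR 2). ring. }
    rewrite Hidx in *. rewrite HZ, <- pow_powerRZ.
    assert (D : forall x, derivable_pt_lim
      (fun z => z * (z + 1) * prodR m (fun j => z ^ 2 - 2 * c j * z + 1)) x
      ((2 * x + 1) * prodR m (fun j => x ^ 2 - 2 * c j * x + 1) + x * (x + 1) * Dp c m x)).
    { intro x. eapply dpl_eq.
      apply (derivable_pt_lim_mult (fun z => z * (z + 1))
              (fun z => prodR m (fun j => z ^ 2 - 2 * c j * z + 1))).
      apply is_derive_Reals. auto_derive; auto. apply prod_der. simpl; ring. }
    assert (E1 := uniqueness_limite _ _ _ _ hd1 (D 1)).
    assert (E2 := uniqueness_limite _ _ _ _ hdm1 (D (-1))).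
    rewrite Dp_1, P_1 in E1. rewrite Dp_m1, P_m1 in E2.
    assert (HB : (2 * m < N)%nat) by lia.
    destruct (ratio_N T N m hT HB) as [R1 R2].
    unfold c in *.
    rewrite E1, E2. rewrite P_1, P_m1. rewrite R1.
    assert (Hden : 0 < 2 + (INR N - 1) * INR T) by (rewrite HNR; pose proof (pos_INR m); nra).
    assert (Hp : 2 ^ m <> 0) by (apply pow_nonzero; lra).
    rewrite HNR in *. split; field; repeat split; lra || auto.
  - assert (E' : Nat.odd N = true) by (unfold Nat.odd; rewrite E; reflexivity).
    apply Nat.odd_spec in E'. destruct E' as [m Hk].
    assert (Hidx : ((N - 1) / 2 = m)%nat).
    { rewrite Hk. replace (2 * m + 1 - 1)%nat with (m * 2)%nat by lia. apply Nat.div_mul; lia. }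
    assert (HZ : ((Z.of_nat N - 3) / 2)%Z = (Z.of_nat m + -1)%Z).
    { rewrite Hk. replace (Z.of_nat (2 * m + 1) - 3)%Z with ((Z.of_nat m + -1) * 2)%Z by lia.
      apply Z.div_mul; lia. }
    assert (HNR : INR N = 2 * INR m + 1).
    { rewrite Hk, plus_INR, mult_INR. simpl (INR 2). simpl (INR 1). ring. }
    rewrite Hidx in *. rewrite HZ, powerRZ_add, <- pow_powerRZ by lra. simpl powerRZ.
    assert (D : forall x, derivable_pt_lim
      (fun z => z * prodR m (fun j => z ^ 2 - 2 * c j * z + 1)) x
      (1 * prodR m (fun j => x ^ 2 - 2 * c j * x + 1) + x * Dp c m x)).
    { intro x. eapply dpl_eq.
      apply (derivable_pt_lim_mult (fun z => z)
              (fun z => prodR m (fun j => z ^ 2 - 2 * c j * z + 1))).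
      apply derivable_pt_lim_id. apply prod_der. reflexivity. }
    assert (E1 := uniqueness_limite _ _ _ _ hd1 (D 1)).
    assert (E2 := uniqueness_limite _ _ _ _ hdm1 (D (-1))).
    rewrite Dp_1, P_1 in E1. rewrite Dp_m1, P_m1 in E2.
    assert (HB : (2 * m < N)%nat) by lia.
    destruct (ratio_N T N m hT HB) as [R1 R2].
    unfold c in *.
    rewrite E1, E2. rewrite P_1, P_m1. rewrite R1.
    assert (Hden : 0 < 2 + (INR N - 1) * INR T) by (rewrite HNR; pose proof (pos_INR m); nra).
    assert (Hp : 2 ^ m <> 0) by (apply pow_nonzero; lra).
    rewrite HNR in *. split; field; repeat split; lra || auto.
Qed.
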